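(* Let $n\ge 3$ and let $K_n$ be the complete graph on $n$ vertices, equipped with a weak IASI in which a vertex $v$ is not mono-indexed. Then the sparing number $\varphi(K_n)$ equals the number of triangles of $K_n$ that contain $v$.
   Context: Let $\mathbb{N}_0$ be the set of non-negative integers and $\mathcal{P}(\mathbb{N}_0)$ its power set; for $A,B\subseteq\mathbb{N}_0$, $A+B=\{a+b: a\in A, b\in B\}$. All graphs are simple, finite, without isolated vertices. An integer additive set-indexer (IASI) of a graph $G$ is an injective map $f:V(G)\to\mathcal{P}(\mathbb{N}_0)$ such that the induced map $f^+:E(G)\to\mathcal{P}(\mathbb{N}_0)$, $f^+(uv)=f(u)+f(v)$, is also injective. A weak IASI is an IASI $f$ with $|f^+(uv)|=\max(|f(u)|,|f(v)|)$ for every edge $uv$. A vertex $v$ (resp. edge $e$) is mono-indexed if $|f(v)|=1$ (resp. $|f^+(e)|=1$). The sparing number $\varphi(G)$ of a graph $G$ admitting a weak IASI is the minimum number of mono-indexed edges over all weak IASIs of $G$. *)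

(* Defs.v *)
From mathcomp Require Import all_boot.
From mathcomp Require Import finmap.
Set Implicit Arguments.
Unset Strict Implicit.
Unset Printing Implicit Defensive.
Local Open Scope fset_scope.

Definition sumset (A B : {fset nat}) : {fset nat} :=
  [fset (a + b)%N | a in A, b in B].

Section Graphs.
Variable V : finType.

Definition simple_graph (g : rel V) : Prop :=
  (forall u, ~~ g u u) /\ (forall u v, g u v = g v u).

Definition no_isolated (g : rel V) : Prop := forall u, exists v, g u v.

Definition complete_rel : rel V := fun u v => u != v.

Definition edges (g : rel V) : {set {set V}} :=
  [set e : {set V} | [exists u, exists v, g u v && (e == [set u; v])]].

Definition is_IASI (g : rel V) (f : V -> {fset nat}) : Prop :=
  injective f /\
  forall u v u' v', g u v -> g u' v' ->
    sumset (f u) (f v) = sumset (f u') (f v') -> [set u; v] = [set u'; v'].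

Definition is_weak_IASI (g : rel V) (f : V -> {fset nat}) : Prop :=
  is_IASI g f /\
  forall u v, g u v -> #|` sumset (f u) (f v)| = maxn #|` f u| #|` f v|.

Definition mono_vertex (f : V -> {fset nat}) (v : V) : bool := #|` f v| == 1.

Definition mono_edge (f : V -> {fset nat}) (e : {set V}) : bool :=
  [exists u, exists v, (e == [set u; v]) && (#|` sumset (f u) (f v)| == 1)].

Definition num_mono_edges (g : rel V) (f : V -> {fset nat}) : nat :=
  #|[set e in edges g | mono_edge f e]|.

Definition is_sparing_number (g : rel V) (k : nat) : Prop :=
  (exists f, is_weak_IASI g f /\ num_mono_edges g f = k) /\
  (forall f, is_weak_IASI g f -> k <= num_mono_edges g f).

Definition triangles (g : rel V) : {set {set V}} :=
  [set t : {set V} | (#|t| == 3) && [forall u in t, forall w in t, (u != w) ==> g u w]].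

Definition triangles_at (g : rel V) (v : V) : {set {set V}} :=
  [set t in triangles g | v \in t].

End Graphs.

(* Main.v *)
Require Import Defs.
From mathcomp Require Import all_boot.
From mathcomp Require Import finmap.
Local Open Scope fset_scope.
Set Implicit Arguments.
Unset Strict Implicit.

Lemma exmax (s : seq nat) x : x \in s -> exists2 M, M \in s & forall a, a \in s -> a <= M.
Proof.
elim: s x => [//|y s IH] x _.
case: s IH => [|z s] IH.
  by exists y => [|a]; rewrite ?inE // => /eqP ->.
have [M Ms HM] := IH z (mem_head _ _).
case: (leqP y M) => hyM.
  exists M; first by rewrite inE Ms orbT.
  by move=> a; rewrite inE => /orP[/eqP ->|/HM].
exists y; first exact: mem_head.
by move=> a; rewrite inE => /orP[/eqP ->//|/HM /leq_trans]; apply; apply: ltnW.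
Qed.

Lemma sumsetP (A B : {fset nat}) x : reflect (exists a b, [/\ a \in A, b \in B & x = (a + b)%N]) (x \in sumset A B).
Proof.
apply: (iffP (imfset2P _ _ _ _ _)).
  by move=> [a ha [b hb ->]]; exists a, b.
by move=> [a [b [ha hb ->]]]; exists a => //; exists b.
Qed.

Lemma sumset_lt (A B : {fset nat}) b1 b2 : A != fset0 -> b1 \in B -> b2 \in B -> b1 < b2 ->
  #|` A| < #|` sumset A B|.
Proof.
move=> /fset0Pn [x hx] hb1 hb2 hlt.
have [M HMA HM] := @exmax (enum_fset A) x hx.
pose C := [fset (a + b1)%N | a in A].
have hC : #|` C| = #|` A|.
  rewrite card_imfset //=; last by move=> ? ?; apply: addIn.
have hnot : (M + b2)%N \notin C.
  apply/negP => /imfsetP [a /= ha haeq].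
  have := HM a ha. rewrite leqNgt; move/negP; apply.
  rewrite -(ltn_add2r b1) -haeq. by rewrite ltn_add2l.
have hsub : (M + b2)%N |` C `<=` sumset A B.
  apply/fsubsetP => y; rewrite in_fset1U => /orP [/eqP -> |].
    by apply/sumsetP; exists M, b2.
  move/imfsetP => [a /= ha ->]. by apply/sumsetP; exists a, b1.
have := fsubset_leq_card hsub.
by rewrite cardfsU1 hnot hC.
Qed.

From mathcomp Require Import zify.

Lemma sumset0 (B : {fset nat}) : sumset fset0 B = fset0.
Proof.
apply/fsetP=> x; rewrite in_fset0; apply/negbTE/negP => /sumsetP [a [b [ha _ _]]].
by rewrite in_fset0 in ha.
Qed.

Lemma sumsetC (A B : {fset nat}) : sumset A B = sumset B A.
Proof.
apply/fsetP=> x; apply/sumsetP/sumsetP => -[a [b [ha hb ->]]]; exists b, a;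
  by rewrite addnC.
Qed.

Lemma two_elems (B : {fset nat}) : 1 < #|` B| ->
  exists b1 b2, [/\ b1 \in B, b2 \in B & b1 < b2].
Proof.
move=> hB.
have : B != fset0 by apply/eqP => h; rewrite h cardfs0 in hB.
case/fset0Pn => b hb.
move: hB; rewrite (cardfsD1 b) hb => hB.
have : B `\ b != fset0 by apply/eqP => h; rewrite h cardfs0 in hB.
case/fset0Pn => c /fsetD1P [hcb hc].
case: (ltngtP b c) => h.
- by exists b, c.
- by exists c, b.
- by rewrite h eqxx in hcb.
Qed.

Section G.
Variable T : finType.
Variable f : T -> {fset nat}.
Hypothesis hf : is_weak_IASI (@complete_rel T) f.

Lemma crel (u w : T) : complete_rel u w = (u != w).
Proof. by []. Qed.

Lemma nonempty (hT : 2 < #|T|) (u : T) : f u != fset0.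
Proof.
case: hf => [[finj _] hw].
apply/eqP => hu.
have hw0 : forall w, w != u -> f w = fset0.
  move=> w hwu; apply: cardfs0_eq.
  have := hw u w; rewrite crel eq_sym hwu hu sumset0 cardfs0 => /(_ isT).
  by rewrite max0n => <-.
have : 0 < #|[set~ u]| by rewrite cardsC1; lia.
case/card_gt0P => w1 hw1.
have : 0 < #|[set~ u] :\ w1|.
  by move: (cardsD1 w1 [set~ u]); rewrite hw1 cardsC1; lia.
case/card_gt0P => w2; rewrite !inE => /andP [h21 h2u].
move: hw1; rewrite !inE => h1u.
have := finj w1 w2; rewrite hw0 // hw0 // => /(_ erefl) h.
by rewrite h eqxx in h21.
Qed.

Lemma at_most_one (hT : 2 < #|T|) (u w : T) : u != w -> ~~ mono_vertex f u -> ~~ mono_vertex f w -> False.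
Proof.
move=> huw; rewrite /mono_vertex => hu hw.
have cu : 1 < #|` f u|.
  have := nonempty hT u; case: (#|` f u| =P 0) => [/cardfs0_eq -> |]; first by rewrite eqxx.
  by move: hu; lia.
have cw : 1 < #|` f w|.
  have := nonempty hT w; case: (#|` f w| =P 0) => [/cardfs0_eq -> |]; first by rewrite eqxx.
  by move: hw; lia.
have [b1 [b2 [hb1 hb2 hlt]]] := two_elems cw.
have l1 := sumset_lt (nonempty hT u) hb1 hb2 hlt.
have [c1 [c2 [hc1 hc2 hlt']]] := two_elems cu.
have l2 := sumset_lt (nonempty hT w) hc1 hc2 hlt'.
rewrite sumsetC in l2.
case: hf => _ /(_ u w); rewrite crel huw => /(_ isT) e.
by move: l1 l2; rewrite e; lia.
Qed.

Definition monoS := [set u | mono_vertex f u].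

Lemma mono_edges_eq (hT : 2 < #|T|) :
  [set e in edges (@complete_rel T) | mono_edge f e] =
  [set e : {set T} | e \subset monoS & #|e| == 2].
Proof.
have hne := nonempty hT.
case: (hf) => _ hw.
apply/setP => e; rewrite !inE.
apply/andP/andP.
- case => /existsP [u /existsP [w /andP [huw /eqP he]]].
  case/existsP => u' /existsP [w' /andP [/eqP he' hc]].
  have h2 : #|e| == 2 by rewrite he cards2 -crel huw.
  split => //.
  have hu'w' : u' != w'.
    apply/negP => /eqP E; move: h2; by rewrite he' E setUid cards1.
  have := hw u' w'; rewrite crel hu'w' => /(_ isT); rewrite (eqP hc) => hm.
  have n1 := hne u'; have n2 := hne w'.
  have c1 : #|` f u'| != 0 by apply/eqP => /cardfs0_eq E; rewrite E eqxx in n1.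
  have c2 : #|` f w'| != 0 by apply/eqP => /cardfs0_eq E; rewrite E eqxx in n2.
  apply/subsetP => x; rewrite he' !inE /mono_vertex => /orP [/eqP -> | /eqP ->]; lia.
- case => hsub /cards2P [u [w [huw he]]].
  split.
    by apply/existsP; exists u; apply/existsP; exists w; rewrite crel huw he eqxx.
  apply/existsP; exists u; apply/existsP; exists w; rewrite he eqxx /=.
  have hu : u \in monoS by apply: (subsetP hsub); rewrite he !inE eqxx.
  have hw' : w \in monoS by apply: (subsetP hsub); rewrite he !inE eqxx orbT.
  move: hu hw'; rewrite !inE /mono_vertex => /eqP hu /eqP hw'.
  by rewrite (hw u w) ?crel // hu hw'.
Qed.

Lemma num_mono_eq (hT : 2 < #|T|) : num_mono_edges (@complete_rel T) f = 'C(#|monoS|, 2).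
Proof. by rewrite /num_mono_edges mono_edges_eq // cards_draws. Qed.

Lemma monoS_big (hT : 2 < #|T|) : #|T|.-1 <= #|monoS|.
Proof.
have hc := cardsC monoS.
have : #|~: monoS| <= 1.
  case: (eqVneq (~: monoS) set0) => [-> | /set0Pn [u hu]]; first by rewrite cards0.
  rewrite -(cards1 u); apply: subset_leq_card; apply/subsetP => w hw.
  rewrite inE; apply/negPn/negP => hwu.
  move: hu hw; rewrite !inE => hu hw.
  exact: (at_most_one hT hwu hw hu).
lia.
Qed.

End G.

Lemma triangles_count (T : finType) (v : T) :
  #|triangles_at (@complete_rel T) v| = 'C(#|T|.-1, 2).
Proof.
pose D := [set e : {set T} | e \subset [set~ v] & #|e| == 2].
have -> : triangles_at (@complete_rel T) v = (fun e => v |: e) @: D.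
  apply/setP => t; rewrite !inE.
  have -> : [forall u in t, forall w in t, (u != w) ==> complete_rel u w].
    by apply/forallP => u; apply/implyP => _; apply/forallP => w; apply/implyP => _; apply/implyP.
  rewrite andbT; apply/andP/imsetP.
  - case => /eqP h3 hv; exists (t :\ v); last by rewrite setD1K.
    rewrite inE; apply/andP; split.
      by apply/subsetP => x; rewrite !inE => /andP [].
    by apply/eqP; move: (cardsD1 v t); rewrite hv h3 /=; lia.
  - case => e; rewrite inE => /andP [hs /eqP h2] ->.
    have hve : v \notin e by apply/negP => /(subsetP hs); rewrite !inE eqxx.
    by rewrite cardsU1 hve h2 setU11.
rewrite card_in_imset ?cards_draws ?cardsC1 //.
move=> e1 e2; rewrite !inE => /andP [h1 _] /andP [h2 _] E.
have n1 : v \notin e1 by apply/negP => /(subsetP h1); rewrite !inE eqxx.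
have n2 : v \notin e2 by apply/negP => /(subsetP h2); rewrite !inE eqxx.
by rewrite -(setU1K n1) -(setU1K n2) E.
Qed.

Theorem proposition2p1 (n : nat) (hn : 3 <= n)
    (f : 'I_n -> {fset nat}) (v : 'I_n)
    (hf : is_weak_IASI (@complete_rel 'I_n) f)
    (hv : ~~ mono_vertex f v) :
  is_sparing_number (@complete_rel 'I_n)
    #|triangles_at (@complete_rel 'I_n) v|.
Proof.
have hT : 2 < #|'I_n| by rewrite card_ord.
rewrite triangles_count; split.
  exists f; split => //.
  rewrite num_mono_eq //.
  have -> : monoS f = [set~ v].
    apply/setP => u; rewrite !inE.
    case: (eqVneq u v) => [-> | huv]; first by apply/negbTE.
    by apply/negPn/negP => hu; exact: (at_most_one hf hT huv hu hv).
  by rewrite cardsC1.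
move=> g hg; rewrite num_mono_eq //; apply: leq_bin2l; exact: monoS_big.
Qed.
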